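(* Let $\boldsymbol{\mathcal{D}} = \begin{pmatrix}\boldsymbol{W}_p\\ \boldsymbol{U}_f \\ \boldsymbol{Y}_f\end{pmatrix}$ be a data matrix with full row rank and LQ decomposition as described in the context, let $\boldsymbol{Z}:=\begin{pmatrix}\boldsymbol{W}_p\\ \boldsymbol{U}_f\end{pmatrix}$, $\boldsymbol{\Pi}:=\boldsymbol{Z}^+\boldsymbol{Z}$, $\boldsymbol{\Pi}_\perp:=\boldsymbol{I}-\boldsymbol{\Pi}$, and $\lambda_a>0$. Then DeePC with regularization $h(\boldsymbol{a}) = \lambda_a \|\boldsymbol{\Pi}_\perp\boldsymbol{a}\|_2^2$ is equivalent to $\boldsymbol{\gamma}$-DDPC with regularization $\tilde h(\boldsymbol{\gamma}) = \lambda_a \|\boldsymbol{\gamma}_3\|_2^2$.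
   Context: $\boldsymbol{Z}^+$ denotes the Moore–Penrose pseudoinverse. Data: $m$ inputs, $p$ outputs, past horizon $N_p$, future horizon $N_f$, $L=N_p+N_f$, and $\ell$ data trajectories. The data matrix $\boldsymbol{\mathcal{D}}\in\mathbb{R}^{L(m+p)\times\ell}$ has blocks $\boldsymbol{W}_p\in\mathbb{R}^{N_p(m+p)\times\ell}$ (past inputs and outputs), $\boldsymbol{U}_f\in\mathbb{R}^{mN_f\times \ell}$, $\boldsymbol{Y}_f\in\mathbb{R}^{pN_f\times\ell}$ and is assumed to have full row rank. Its LQ decomposition is $\boldsymbol{\mathcal{D}} = \begin{pmatrix} \boldsymbol{L}_{11} & \boldsymbol{0} & \boldsymbol{0} & \boldsymbol{0} \\ \boldsymbol{L}_{21} & \boldsymbol{L}_{22} & \boldsymbol{0} & \boldsymbol{0} \\ \boldsymbol{L}_{31} & \boldsymbol{L}_{32} & \boldsymbol{L}_{33} & \boldsymbol{0} \end{pmatrix}\begin{pmatrix}\boldsymbol{Q}_1\\ \boldsymbol{Q}_2\\ \boldsymbol{Q}_3\\ \boldsymbol{Q}_4\end{pmatrix}$, with non-singular square diagonal blocks $\boldsymbol{L}_{11},\boldsymbol{L}_{22},\boldsymbol{L}_{33}$ (of sizes matching $\boldsymbol{W}_p,\boldsymbol{U}_f,\boldsymbol{Y}_f$) and $\boldsymbol{Q}=\begin{pmatrix}\boldsymbol{Q}_1^\top & \boldsymbol{Q}_2^\top&\boldsymbol{Q}_3^\top&\boldsymbol{Q}_4^\top\end{pmatrix}^\top\in\mathbb{R}^{\ell\times\ell}$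 orthogonal; $\boldsymbol{\gamma}_i := \boldsymbol{Q}_i\boldsymbol{a}$. Given current past I/O data $\boldsymbol{\xi}\in\mathbb{R}^{N_p(m+p)}$, a cost $J(\boldsymbol{\xi},\mathbf{u}_f,\mathbf{y}_f)$ and constraint sets $\mathcal{U}$, $\mathcal{Y}$: DeePC with regularization $h$ is the problem $\min_{\mathbf{u}_f,\mathbf{y}_f,\boldsymbol{a}} J(\boldsymbol{\xi},\mathbf{u}_f,\mathbf{y}_f)+h(\boldsymbol{a})$ s.t. $(\boldsymbol{\xi};\mathbf{u}_f;\mathbf{y}_f)=\boldsymbol{\mathcal{D}}\boldsymbol{a}$, $(\mathbf{u}_f,\mathbf{y}_f)\in\mathcal{U}\times\mathcal{Y}$. $\boldsymbol{\gamma}$-DDPC with regularization $\tilde h$ is the problem $\min_{\mathbf{u}_f,\mathbf{y}_f,\boldsymbol{\gamma}_2,\boldsymbol{\gamma}_3} J(\boldsymbol{\xi},\mathbf{u}_f,\mathbf{y}_f)+\tilde h(\boldsymbol{\gamma})$ s.t. $\boldsymbol{\gamma}_1=\boldsymbol{L}_{11}^{-1}\boldsymbol{\xi}$, $\mathbf{u}_f = \boldsymbol{L}_{21}\boldsymbol{\gamma}_1+\boldsymbol{L}_{22}\boldsymbol{\gamma}_2$, $\mathbf{y}_f=\boldsymbol{L}_{31}\boldsymbol{\gamma}_1+\boldsymbol{L}_{32}\boldsymbol{\gamma}_2+\boldsymbol{L}_{33}\boldsymbol{\gamma}_3$, $(\mathbf{u}_f,\mathbf{y}_f)\in\mathcal{U}\times\mathcal{Y}$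 (i.e., $\boldsymbol{\gamma}_4=\boldsymbol{0}$ is fixed). Two such optimal control problems are called equivalent if, for every $\boldsymbol{\xi}$, they yield the same optimal predicted input/output trajectories $(\mathbf{u}_f^\ast,\mathbf{y}_f^\ast)$ (not necessarily the same optimal cost). *)

(* Defs.v *)
From HB Require Import structures.
From mathcomp Require Import all_boot all_order all_algebra.
Set Implicit Arguments. Unset Strict Implicit. Unset Printing Implicit Defensive.
Import Order.TTheory GRing.Theory Num.Theory.
Local Open Scope ring_scope.

Section DDPC.
Variable R : realFieldType.

Definition sqnorm n (v : 'cV[R]_n) : R := \sum_(i < n) (v i 0) ^+ 2.

(* X is the Moore-Penrose pseudoinverse of Z (the four Penrose conditions;
   over the reals the adjoint is the transpose). *)
Definition is_MP_pinv r c (Z : 'M[R]_(r, c)) (X : 'M[R]_(c, r)) : Prop :=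
  [/\ Z *m X *m Z = Z, X *m Z *m X = X,
      (Z *m X)^T = Z *m X & (X *m Z)^T = X *m Z].

Variables (nW nU nY q4 l : nat).

Definition deepc_feasible (D : 'M[R]_(nW + (nU + nY), l))
  (U : 'cV[R]_nU -> Prop) (Y : 'cV[R]_nY -> Prop)
  (xi : 'cV[R]_nW) (u : 'cV[R]_nU) (y : 'cV[R]_nY) (a : 'cV[R]_l) : Prop :=
  col_mx xi (col_mx u y) = D *m a /\ U u /\ Y y.

Definition deepc_optimal (D : 'M[R]_(nW + (nU + nY), l))
  (h : 'cV[R]_l -> R)
  (J : 'cV[R]_nW -> 'cV[R]_nU -> 'cV[R]_nY -> R)
  (U : 'cV[R]_nU -> Prop) (Y : 'cV[R]_nY -> Prop)
  (xi : 'cV[R]_nW) (u : 'cV[R]_nU) (y : 'cV[R]_nY) : Prop :=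
  exists a, deepc_feasible D U Y xi u y a /\
    forall u' y' a', deepc_feasible D U Y xi u' y' a' ->
      J xi u y + h a <= J xi u' y' + h a'.

Definition gddpc_feasible (L11 : 'M[R]_nW) (L21 : 'M[R]_(nU, nW))
  (L22 : 'M[R]_nU) (L31 : 'M[R]_(nY, nW)) (L32 : 'M[R]_(nY, nU))
  (L33 : 'M[R]_nY)
  (U : 'cV[R]_nU -> Prop) (Y : 'cV[R]_nY -> Prop)
  (xi : 'cV[R]_nW) (u : 'cV[R]_nU) (y : 'cV[R]_nY)
  (g2 : 'cV[R]_nU) (g3 : 'cV[R]_nY) : Prop :=
  let g1 := invmx L11 *m xi in
  u = L21 *m g1 + L22 *m g2 /\
  y = L31 *m g1 + L32 *m g2 + L33 *m g3 /\ U u /\ Y y.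

Definition gddpc_optimal (L11 : 'M[R]_nW) (L21 : 'M[R]_(nU, nW))
  (L22 : 'M[R]_nU) (L31 : 'M[R]_(nY, nW)) (L32 : 'M[R]_(nY, nU))
  (L33 : 'M[R]_nY)
  (ht : 'cV[R]_nW -> 'cV[R]_nU -> 'cV[R]_nY -> 'cV[R]_q4 -> R)
  (J : 'cV[R]_nW -> 'cV[R]_nU -> 'cV[R]_nY -> R)
  (U : 'cV[R]_nU -> Prop) (Y : 'cV[R]_nY -> Prop)
  (xi : 'cV[R]_nW) (u : 'cV[R]_nU) (y : 'cV[R]_nY) : Prop :=
  let g1 := invmx L11 *m xi in
  exists g2 g3, gddpc_feasible L11 L21 L22 L31 L32 L33 U Y xi u y g2 g3 /\
    forall u' y' g2' g3',
      gddpc_feasible L11 L21 L22 L31 L32 L33 U Y xi u' y' g2' g3' ->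
      J xi u y + ht g1 g2 g3 0 <= J xi u' y' + ht g1 g2' g3' 0.

Definition ocp_equivalent
  (P1 P2 : 'cV[R]_nW -> 'cV[R]_nU -> 'cV[R]_nY -> Prop) : Prop :=
  forall xi u y, P1 xi u y <-> P2 xi u y.

End DDPC.

(* Main.v *)
Require Import Defs.
From HB Require Import structures.
From mathcomp Require Import all_boot all_order all_algebra.
Import Order.TTheory GRing.Theory Num.Theory.
Local Open Scope ring_scope.

Lemma sqnormE {R : realFieldType} n (v : 'cV[R]_n) : sqnorm v = (v^T *m v) 0 0.
Proof. rewrite /sqnorm mxE; apply: eq_bigr => i _; by rewrite !mxE expr2. Qed.

Lemma sqnorm_ge0 {R : realFieldType} n (v : 'cV[R]_n) : 0 <= sqnorm v.
Proof. apply: sumr_ge0 => i _; exact: sqr_ge0. Qed.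

Lemma sqnorm0 {R : realFieldType} n : sqnorm (0 : 'cV[R]_n) = 0.
Proof. apply: big1 => i _; by rewrite mxE expr0n. Qed.

Lemma sqnorm_col {R : realFieldType} n1 n2 (a : 'cV[R]_n1) (b : 'cV[R]_n2) :
  sqnorm (col_mx a b) = sqnorm a + sqnorm b.
Proof.
rewrite /sqnorm big_split_ord /=; congr (_ + _); apply: eq_bigr => i _.
  by rewrite col_mxEu. by rewrite col_mxEd.
Qed.

Lemma sqnorm_iso {R : realFieldType} n k (Q : 'M[R]_(n, k)) (v : 'cV[R]_n) :
  Q *m Q^T = 1%:M -> sqnorm (Q^T *m v) = sqnorm v.
Proof.
move=> HQ; rewrite !sqnormE trmx_mul trmxK mulmxA -(mulmxA v^T) HQ mulmx1 //.
Qed.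

Theorem proposition4 (R : realFieldType) (m p Np Nf q4 l : nat)
  (Wp : 'M[R]_(Np * (m + p), l)) (Uf : 'M[R]_(m * Nf, l))
  (Yf : 'M[R]_(p * Nf, l))
  (L11 : 'M[R]_(Np * (m + p))) (L21 : 'M[R]_(m * Nf, Np * (m + p)))
  (L22 : 'M[R]_(m * Nf)) (L31 : 'M[R]_(p * Nf, Np * (m + p)))
  (L32 : 'M[R]_(p * Nf, m * Nf)) (L33 : 'M[R]_(p * Nf))
  (Q1 : 'M[R]_(Np * (m + p), l)) (Q2 : 'M[R]_(m * Nf, l))
  (Q3 : 'M[R]_(p * Nf, l)) (Q4 : 'M[R]_(q4, l))
  (Zp : 'M[R]_(l, Np * (m + p) + m * Nf)) (lambda_a : R) :
  (* full row rank of the data matrix *)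
  row_free (col_mx Wp (col_mx Uf Yf)) ->
  (* Q = (Q1; Q2; Q3; Q4) is an l x l orthogonal matrix *)
  l = (Np * (m + p) + (m * Nf + (p * Nf + q4)))%N ->
  (let Q := col_mx Q1 (col_mx Q2 (col_mx Q3 Q4)) in Q *m Q^T = 1%:M) ->
  (* LQ decomposition with non-singular diagonal blocks *)
  L11 \in unitmx -> L22 \in unitmx -> L33 \in unitmx ->
  Wp = L11 *m Q1 ->
  Uf = L21 *m Q1 + L22 *m Q2 ->
  Yf = L31 *m Q1 + L32 *m Q2 + L33 *m Q3 ->
  (* Zp is the Moore-Penrose pseudoinverse of Z = (Wp; Uf) *)
  is_MP_pinv (col_mx Wp Uf) Zp ->
  0 < lambda_a ->
  let Pi := Zp *m col_mx Wp Uf in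
  let Pi_perp := 1%:M - Pi in
  forall (J : 'cV[R]_(Np * (m + p)) -> 'cV[R]_(m * Nf) -> 'cV[R]_(p * Nf) -> R)
         (U : 'cV[R]_(m * Nf) -> Prop) (Y : 'cV[R]_(p * Nf) -> Prop),
  ocp_equivalent
    (deepc_optimal (col_mx Wp (col_mx Uf Yf))
       (fun a => lambda_a * sqnorm (Pi_perp *m a)) J U Y)
    (gddpc_optimal L11 L21 L22 L31 L32 L33
       (fun (g1 : 'cV[R]_(Np * (m + p))) (g2 : 'cV[R]_(m * Nf))
            (g3 : 'cV[R]_(p * Nf)) (g4 : 'cV[R]_q4) =>
          lambda_a * sqnorm g3) J U Y).
Proof.
move=> _ El HQ uL11 uL22 uL33 EW EU EY [P1 P2 P3 P4] lam_gt0 Pi Pi_perp J U Y.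
subst l.
set Q := col_mx Q1 (col_mx Q2 (col_mx Q3 Q4)) in HQ.
have HQ' : Q^T *m Q = 1%:M by apply: mulmx1C.
set Z := col_mx Wp Uf.
pose col4 (g1 : 'cV[R]_(Np * (m + p))) (g2 : 'cV[R]_(m * Nf)) (g3 : 'cV[R]_(p * Nf)) (g4 : 'cV[R]_q4) :=
  col_mx g1 (col_mx g2 (col_mx g3 g4)).
have QTcol : forall g1 g2 g3 g4, Q^T *m col4 g1 g2 g3 g4 =
   Q1^T *m g1 + Q2^T *m g2 + Q3^T *m g3 + Q4^T *m g4.
  by move=> *; rewrite /Q !tr_col_mx !mul_row_col !addrA.
have Qcol : forall g1 g2 g3 g4, let a := Q^T *m col4 g1 g2 g3 g4 in
   [/\ Q1 *m a = g1, Q2 *m a = g2, Q3 *m a = g3 & Q4 *m a = g4].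
  move=> g1 g2 g3 g4 a.
  have : Q *m a = col4 g1 g2 g3 g4 by rewrite /a mulmxA HQ mul1mx.
  rewrite /Q !mul_col_mx => /eq_col_mx [-> /eq_col_mx [-> /eq_col_mx [-> ->]]].
  by [].
have Qsurj : forall a, a = Q^T *m col4 (Q1 *m a) (Q2 *m a) (Q3 *m a) (Q4 *m a).
  by move=> a; rewrite /col4 -!mul_col_mx -/Q mulmxA HQ' mul1mx.
have PiZT : Pi_perp *m Z^T = 0.
  have PiT : Pi^T = Pi by [].
  have ZPi : Z *m Pi = Z by rewrite /Pi /Z mulmxA P1.
  by rewrite /Pi_perp mulmxDl mulNmx mul1mx -PiT -trmx_mul ZPi subrr.
have [PiW PiU] : Pi_perp *m Wp^T = 0 /\ Pi_perp *m Uf^T = 0.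
  move: PiZT; rewrite /Z tr_col_mx mul_mx_row -row_mx0.
  by move/eq_row_mx.
have PiQ1 : Pi_perp *m Q1^T = 0.
  have -> : Q1^T = Wp^T *m invmx L11^T.
    by rewrite EW trmx_mul mulmxK ?unitmx_tr.
  by rewrite mulmxA PiW mul0mx.
have PiQ2 : Pi_perp *m Q2^T = 0.
  have -> : Q2^T = (Uf^T - Q1^T *m L21^T) *m invmx L22^T.
    by rewrite EU linearD /= !trmx_mul addrC addKr mulmxK ?unitmx_tr.
  by rewrite mulmxA mulmxBr PiU mulmxA PiQ1 mul0mx subrr mul0mx.
have PiQ : forall g1 g2 g3 g4, Pi_perp *m (Q^T *m col4 g1 g2 g3 g4) = Q^T *m col4 0 0 g3 g4.
  move=> g1 g2 g3 g4.
  have Ev : Q^T *m col4 g1 g2 g3 g4 = Q1^T *m g1 + Q2^T *m g2 + Q^T *m col4 0 0 g3 g4.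
    by rewrite !QTcol !mulmx0 !add0r addrA.
  rewrite Ev.
  set v := Q^T *m col4 0 0 g3 g4.
  have [q1 q2 _ _] := Qcol 0 0 g3 g4.
  have Zv : Z *m v = 0.
    by rewrite /Z mul_col_mx EW EU mulmxDl -!mulmxA q1 q2 !mulmx0 addr0 col_mx0.
  rewrite !mulmxDr (mulmxA Pi_perp Q1^T) PiQ1 (mulmxA Pi_perp Q2^T) PiQ2 !mul0mx !add0r.
  by rewrite /Pi_perp mulmxDl mulNmx mul1mx /Pi -mulmxA -/Z Zv mulmx0 subr0.
have Cost : forall g1 g2 g3 g4, sqnorm (Pi_perp *m (Q^T *m col4 g1 g2 g3 g4)) = sqnorm g3 + sqnorm g4.
  by move=> *; rewrite PiQ sqnorm_iso // /col4 !sqnorm_col !sqnorm0 !add0r.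
have Feas : forall xi u y g1 g2 g3 g4,
  deepc_feasible (col_mx Wp (col_mx Uf Yf)) U Y xi u y (Q^T *m col4 g1 g2 g3 g4) <->
  g1 = invmx L11 *m xi /\ gddpc_feasible L11 L21 L22 L31 L32 L33 U Y xi u y g2 g3.
  move=> xi u y g1 g2 g3 g4.
  have [q1 q2 q3 _] := Qcol g1 g2 g3 g4.
  rewrite /deepc_feasible /gddpc_feasible /= !mul_col_mx EW EU EY !mulmxDl -!mulmxA q1 q2 q3.
  split.
    case=> /eq_col_mx [-> /eq_col_mx [-> ->]] [Hu Hy].
    by rewrite mulKmx.
  case=> -> [-> [-> [Hu Hy]]].
  by rewrite mulKVmx.
move=> xi u y; split.
  case=> a [Fa Opt].
  have [g1 [g2 [g3 [g4 Ea]]]] : exists g1 g2 g3 g4, a = Q^T *m col4 g1 g2 g3 g4.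
    by do 4 eexists; exact: Qsurj.
  subst a.
  move/Feas: Fa => [Eg1 Fg].
  exists g2, g3; split => // u' y' g2' g3' Fg'.
  have := Opt u' y' (Q^T *m col4 g1 g2' g3' 0).
  rewrite !Cost sqnorm0 addr0 => H.
  have {}H := H (proj2 (Feas _ _ _ _ _ _ _) (conj Eg1 Fg')).
  apply: le_trans H.
  by rewrite lerD2l ler_pM2l // lerDl sqnorm_ge0.
case=> g2 [g3 [Fg Opt]].
exists (Q^T *m col4 (invmx L11 *m xi) g2 g3 0); split.
  by apply/Feas; split.
move=> u' y' a' Fa'.
have [g1' [g2' [g3' [g4' Ea]]]] : exists g1 g2 g3 g4, a' = Q^T *m col4 g1 g2 g3 g4.
  by do 4 eexists; exact: Qsurj.
subst a'.
move/Feas: Fa' => [Eg1' Fg'].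
rewrite !Cost sqnorm0 addr0.
have /= H := Opt u' y' g2' g3' Fg'.
apply: (le_trans H).
by rewrite lerD2l ler_pM2l // lerDl sqnorm_ge0.
Qed.
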